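(* Let $\Sigma$ be a finite alphabet and $S=s_0\cdots s_{m-1}\in\Sigma^m$. Then the set $\mathrm{Sub}(S)$ of all substrings of $S$, including the empty string $\varepsilon$, is a set of window representatives of length $m$.
   Context: For a finite set $\mathcal{R}\subset\Sigma^*$ and $a\in\Sigma^m$, $\mathrm{rep}_\mathcal{R}(a)$ denotes the longest suffix of $a$ (suffixes include $\varepsilon$ and $a$ itself) lying in $\mathcal{R}$. $\mathcal{R}$ is a set of window representatives of length $m$ if (1) every $a\in\Sigma^m$ has a suffix in $\mathcal{R}$ (so $\mathrm{rep}_\mathcal{R}$ is well defined on $\Sigma^m$), and (2) there exists a function $\delta_\mathcal{R}:\mathcal{R}\times\Sigma\to\mathcal{R}$ with $\delta_\mathcal{R}(\mathrm{rep}_\mathcal{R}(a),\sigma)=\mathrm{rep}_\mathcal{R}(a_1\cdots a_{m-1}\sigma)$ for all $a=a_0\cdots a_{m-1}\in\Sigma^m$ and $\sigma\in\Sigma$. *)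

(* Defs.v *)
From mathcomp Require Import all_boot.
Set Implicit Arguments. Unset Strict Implicit. Unset Printing Implicit Defensive.

(* Strings over an alphabet Sigma are sequences [seq Sigma]; a finite set of
   strings R is represented by a finite list [R : seq (seq Sigma)] (membership
   [w \in R]). *)

Definition suffixes (Sigma : eqType) (a : seq Sigma) : seq (seq Sigma) :=
  [seq drop i a | i <- iota 0 (size a).+1].

(* rep_R(a): the longest suffix of a lying in R (default [::] if none). *)
Definition rep (Sigma : eqType) (R : seq (seq Sigma)) (a : seq Sigma) : seq Sigma :=
  head [::] [seq w <- suffixes a | w \in R].

Definition window_representatives (Sigma : eqType) (m : nat)
    (R : seq (seq Sigma)) : Prop :=
  (forall a : seq Sigma, size a = m -> has (fun w => w \in R) (suffixes a)) /\
  exists delta : seq Sigma -> Sigma -> seq Sigma,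
    (forall r sigma, r \in R -> delta r sigma \in R) /\
    (forall (a : seq Sigma) (sigma : Sigma), size a = m ->
        delta (rep R a) sigma = rep R (rcons (behead a) sigma)).

Definition substrings (Sigma : eqType) (S : seq Sigma) : seq (seq Sigma) :=
  [seq take j (drop i S) | i <- iota 0 (size S).+1, j <- iota 0 (size S).+1].

(* Main.v *)
Require Import Defs.
From mathcomp Require Import all_boot.
From mathcomp Require Import zify.

Definition sfx {T : Type} (u w : seq T) : Prop := u = drop (size w - size u) w.

Lemma sfx_size {T : Type} (u w : seq T) : sfx u w -> size u <= size w.
Proof. by move=> ->; rewrite size_drop leq_subr. Qed.
Arguments sfx_size {T u w}.

Lemma sfx_drop {T : Type} i (w : seq T) : i <= size w -> sfx (drop i w) w.
Proof. move=> h; rewrite /sfx size_drop; congr drop; lia. Qed.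

Lemma sfx_le {T : Type} (u v w : seq T) :
  sfx u w -> sfx v w -> size u <= size v -> sfx u v.
Proof.
move=> hu hv le; have hvw := sfx_size hv.
rewrite /sfx.
have -> : drop (size v - size u) v = drop (size v - size u) (drop (size w - size v) w) by rewrite -hv.
rewrite drop_drop {1}hu; congr drop; lia.
Qed.
Arguments sfx_le {T u v w}.

Lemma sfx_trans {T : Type} (u v w : seq T) : sfx u v -> sfx v w -> sfx u w.
Proof.
move=> hu hv; have h1 := sfx_size hu; have h2 := sfx_size hv.
rewrite /sfx {1}hu.
have -> : drop (size v - size u) v = drop (size v - size u) (drop (size w - size v) w) by rewrite -hv.
rewrite drop_drop; congr drop; lia.
Qed.
Arguments sfx_trans {T u v w}.

Lemma sfx_behead {T : Type} (u w : seq T) : sfx u (behead w) -> sfx u w.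
Proof.
case: w => [//|x w] h; apply: (sfx_trans h); rewrite /=.
rewrite /sfx /=; have -> : (size w).+1 - size w = 1 by lia.
by rewrite /= drop0.
Qed.
Arguments sfx_behead {T u w}.

Lemma sfx_behead2 {T : Type} (u w : seq T) :
  sfx u w -> size u < size w -> sfx u (behead w).
Proof.
move=> h lt; apply: (sfx_le h); first (rewrite -drop1; apply: sfx_drop; lia).
rewrite size_behead; lia.
Qed.
Arguments sfx_behead2 {T u w}.

Lemma sfx_nil {T : Type} (w : seq T) : sfx [::] w.
Proof. by rewrite /sfx subn0 drop_size. Qed.

Lemma sfx_rcons {T : Type} (u w : seq T) x y :
  sfx (rcons u x) (rcons w y) <-> x = y /\ sfx u w.
Proof.
rewrite /sfx !size_rcons subSS.
case: (leqP (size u) (size w)) => h.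
  rewrite drop_rcons ?leq_subr //; split.
    by move/rcons_inj=> [e1 e2]; split.
  by case=> -> e; rewrite -e.
have -> : size w - size u = 0 by lia.
rewrite !drop0; split.
  move/rcons_inj=> [e _]; move: h; rewrite e; lia.
case=> _ e; move: h; rewrite -e; lia.
Qed.

Section Rep.
Variable (T : eqType) (R : seq (seq T)) (w : seq T).

Lemma aux n k : (exists2 j, k <= j < k + n & drop j w \in R) ->
  exists i, [/\ k <= i < k + n,
     head [::] [seq x <- [seq drop i w | i <- iota k n] | x \in R] = drop i w,
     drop i w \in R & forall j, k <= j < i -> drop j w \notin R].
Proof.
elim: n k => [|n IH] k.
  by case=> j; rewrite addn0; lia.
move=> [j hj hR] /=.
case: (boolP (drop k w \in R)) => hk.
  exists k; split => //; try lia.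
have [|i [h1 h2 h3 h4]] := IH k.+1.
  exists j => //; case: (j =P k) hR => [-> |ne _]; first by rewrite (negbTE hk).
  lia.
exists i; split => //; first lia.
move=> j' hj'; case: (j' =P k) => [-> //|ne]; apply: h4; lia.
Qed.

Hypothesis nilR : [::] \in R.

Lemma rep_spec : exists i, [/\ i <= size w, rep R w = drop i w,
  drop i w \in R & forall j, j < i -> drop j w \notin R].
Proof.
have [|i [h1 h2 h3 h4]] := aux (size w).+1 0.
  exists (size w); rewrite ?drop_size //; lia.
exists i; split => //; try lia; try (move=> j hj; apply: h4; lia).
Qed.

Lemma rep_in : rep R w \in R.
Proof. by have [i [_ -> ? _]] := rep_spec. Qed.

Lemma rep_sfx : sfx (rep R w) w.
Proof. by have [i [? -> _ _]] := rep_spec; apply: sfx_drop. Qed.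

Lemma rep_max u : sfx u w -> u \in R -> size u <= size (rep R w).
Proof.
move=> hu uR; have [i [h1 -> _ h4]] := rep_spec.
have hs := sfx_size hu.
rewrite size_drop.
case: (leqP i (size w - size u)) => h; first lia.
by have := h4 _ h; rewrite -hu uR.
Qed.
End Rep.
Arguments rep_in {T} R w nilR.
Arguments rep_sfx {T} R w nilR.
Arguments rep_max {T R w} nilR {u}.

Lemma rep_ext {T : eqType} (R : seq (seq T)) w1 w2 : [::] \in R ->
  (forall u, u \in R -> (sfx u w1 <-> sfx u w2)) -> rep R w1 = rep R w2.
Proof.
move=> nil H.
have s1 := rep_sfx R w1 nil; have s2 := rep_sfx R w2 nil.
have i1 := rep_in R w1 nil; have i2 := rep_in R w2 nil.
have l1 := rep_max nil (proj1 (H _ i1) s1) i1.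
have l2 := rep_max nil (proj2 (H _ i2) s2) i2.
have e : size (rep R w1) = size (rep R w2) by apply/eqP; rewrite eqn_leq l1 l2.
have := proj1 (H _ i1) s1; rewrite /sfx e => ->; exact: esym.
Qed.

Lemma sub_in {T : eqType} (S u : seq T) :
  u \in substrings S -> exists i j, u = take j (drop i S).
Proof. by case/allpairsP => [[i j] [_ _ ->]]; exists i, j. Qed.

Lemma sub_size {T : eqType} {S u : seq T} : u \in substrings S -> size u <= size S.
Proof.
case/sub_in => i [j ->]; rewrite size_take_min size_drop; lia.
Qed.

Lemma sub_take {T : eqType} (S u : seq T) k :
  u \in substrings S -> take k u \in substrings S.
Proof.
case/sub_in => i [j ->].
case: (leqP (size S).+1 i) => hi.
  rewrite drop_oversize ?take_nil; last lia.
  apply/allpairsP; exists (0, 0); rewrite /= take0; split => //; by rewrite mem_iota.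
apply/allpairsP; exists (i, minn (minn k j) (size S)); split.
- rewrite mem_iota add0n leq0n /=; lia.
- rewrite mem_iota add0n leq0n /=; lia.
- rewrite /= -take_min; case: (leqP (minn k j) (size S)) => h.
    by [].
  rewrite !take_oversize // size_drop; lia.
Qed.

Lemma sub_nil {T : eqType} (S : seq T) : [::] \in substrings S.
Proof.
apply/allpairsP; exists (0, 0); rewrite /= take0; split => //; by rewrite mem_iota.
Qed.

Theorem lemma16 (Sigma : finType) (m : nat) (S : seq Sigma) :
  size S = m -> window_representatives m (substrings S).
Proof.
move=> hS; set R := substrings S.
have nil : [::] \in R := sub_nil S.
split.
  move=> a _; apply/hasP; exists (drop (size a) a); last by rewrite drop_size.
  apply/mapP; exists (size a) => //; rewrite mem_iota; lia.
exists (fun r s => rep R (rcons r s)); split.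
  by move=> r s _; apply: rep_in.
move=> a s ha; apply: rep_ext => // u uR.
case/lastP: u uR => [|u' x] uR; first by split => _; apply: sfx_nil.
have hu := sub_size uR; rewrite size_rcons hS in hu.
have u'R : u' \in R.
  have -> : u' = take (size u') (rcons u' x) by rewrite -cats1 takel_cat // take_size.
  exact: sub_take.
rewrite !sfx_rcons; split; case=> -> h; split => //.
- apply: sfx_behead2; last lia.
  exact: sfx_trans h (rep_sfx R a nil).
- exact: (sfx_le (sfx_behead h) (rep_sfx R a nil) (rep_max nil (sfx_behead h) u'R)).
Qed.
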